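(* The class of majority functions is exactly learnable under the uniform distribution on $\{-1,1\}^n$.
   Context: For $I\subseteq[n]$ with $|I|$ odd, the majority function $\mathrm{maj}_I:\{-1,1\}^n\to\{-1,1\}$ is $\mathrm{maj}_I(x)=\mathrm{sgn}\left(\sum_{i\in I}x_i\right)$. Exact learnability under a distribution means: there is an algorithm which, for every $n$, every target majority $c$ and every $\delta>0$, given a number of i.i.d. examples from the distribution labelled by $c$ that is polynomial in $n$ and $1/\delta$, outputs with probability at least $1-\delta$ a hypothesis equal to $c$ on all of $\{-1,1\}^n$. *)

(* Defs.v *)
From Stdlib Require Import Reals.
From mathcomp Require Import all_boot all_order all_algebra.
Set Implicit Arguments. Unset Strict Implicit. Unset Printing Implicit Defensive.
Import GRing.Theory Num.Theory.

(* The cube {-1,1}^n: a point is a finite function 'I_n -> bool,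
   where true encodes +1 and false encodes -1. *)
Definition cube (n : nat) : finType := {ffun 'I_n -> bool}.

Definition pm (b : bool) : int := if b then 1%R else (-1)%R.

(* maj_I(x) = sgn(sum_{i in I} x_i), valued in {-1,0,1} in int
   (never 0 when |I| is odd). *)
Definition maj (n : nat) (I : {set 'I_n}) (x : cube n) : int :=
  Num.sg (\sum_(i in I) pm (x i))%R.

Definition learner := forall n : nat, R -> seq (cube n * int) -> (cube n -> int).

(* Probability, over m i.i.d. uniform examples from {-1,1}^n labelled by
   maj_I, that the hypothesis output by [A] equals maj_I on all of {-1,1}^n. *)
Definition success_prob (n : nat) (I : {set 'I_n}) (m : nat)
  (A : seq (cube n * int) -> (cube n -> int)) : R :=
  Rdiv (INR #|[set xs : m.-tuple (cube n) |
           [forall x : cube n, A [seq (y, maj I y) | y <- xs] x == maj I x]]|)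
       (INR #|{: m.-tuple (cube n)}|).

Definition poly_sample_size (m : nat -> R -> nat) : Prop :=
  exists (c k : nat), forall (n : nat) (delta : R), Rlt R0 delta ->
    Rle (INR (m n delta)) (Rmult (Rmult (INR c) (pow (Rplus (INR n) R1) k)) (pow (Rplus R1 (Rinv delta)) k)).

Definition majorities_exactly_learnable_uniform : Prop :=
  exists (m : nat -> R -> nat) (L : learner),
    poly_sample_size m /\
    forall (n : nat) (I : {set 'I_n}), odd #|I| ->
    forall delta : R, Rlt R0 delta ->
      Rle (Rminus R1 delta) (success_prob I (m n delta) (L n delta)).

(* Main.v *)
Require Import Defs.
From Stdlib Require Import Reals.
From mathcomp Require Import all_boot all_order all_algebra.
From Stdlib Require Import Lra Lia.
Set Implicit Arguments. Unset Strict Implicit. Unset Printing Implicit Defensive.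
Import GRing.Theory Num.Theory.

Section Comb.
Variable n : nat.
Implicit Types (I J : {set 'I_n}) (x y : cube n) (i j : 'I_n).

Definition flip i x : cube n := [ffun j => if j == i then ~~ x j else x j].

Lemma flipK i : involutive (flip i).
Proof. by move=> x; apply/ffunP=> j; rewrite !ffunE; case: (j == i) => //; rewrite negbK. Qed.

Lemma flip_inj i : injective (flip i).
Proof. exact: inv_inj (flipK i). Qed.

Lemma pmN b : pm (~~ b) = (- pm b)%R.
Proof. by case: b. Qed.

Lemma maj_flip_out I i x : i \notin I -> maj I (flip i x) = maj I x.
Proof.
move=> iI; rewrite /maj; congr Num.sg; apply: eq_bigr => j jI.
rewrite ffunE; case: eqP => // eji; by move: iI; rewrite -eji jI.
Qed.

Lemma sum_pm_odd I x : odd #|I| -> (\sum_(j in I) pm (x j))%R != 0%R.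
Proof.
move=> oI.
have E : (\sum_(j in I) pm (x j))%R = (#|I|%:R - (2 * \sum_(j in I) (~~ x j : nat))%:R : int)%R.
  rewrite -sum1_card natrM !natr_sum mulr_sumr -sumrB; apply: eq_bigr => j _.
  by case: (x j).
rewrite E subr_eq0; apply/eqP => /eqP; rewrite eqr_nat => /eqP h.
by move: oI; rewrite h oddM.
Qed.

Lemma maj_neq0 I x : odd #|I| -> maj I x != 0%R.
Proof. by move=> oI; rewrite /maj sgr_eq0 sum_pm_odd. Qed.


Definition flips (s : seq 'I_n) x := foldl (fun y i => flip i y) x s.

Lemma flipsE s x j : uniq s -> flips s x j = if j \in s then ~~ x j else x j.
Proof.
elim: s x => [|a s IH] x //= /andP [aNs us].
rewrite IH // in_cons ffunE; case: eqP => [->|_] /=; last by [].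
by rewrite (negbTE aNs).
Qed.

Definition piv I i := [set x | maj I x != maj I (flip i x)].

Lemma path_bound I s :
  #|[set x | maj I x != maj I (flips s x)]| <= \sum_(i <- s) #|piv I i|.
Proof.
elim: s => [|a s IH].
  rewrite big_nil (_ : [set x | _] = set0) ?cards0 //.
  by apply/setP=> x; rewrite !inE /= eqxx.
rewrite big_cons.
set B := [set z | maj I z != maj I (flips s z)] in IH.
apply: (@leq_trans #|piv I a :|: flip a @^-1: B|).
  apply: subset_leq_card; apply/subsetP=> x; rewrite !inE /= => h.
  apply/orP; case: (eqVneq (maj I x) (maj I (flip a x))) => [e|ne]; last by left.
  by right; rewrite -e.
apply: leq_trans (leq_card_setU _ _).1 _.
by rewrite card_preimset ?leq_add2l //; exact: flip_inj.
Qed.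

Lemma piv_sum I : odd #|I| -> 2 ^ n <= \sum_(i in I) #|piv I i|.
Proof.
move=> oI; rewrite -big_enum.
apply: leq_trans (path_bound I (enum I)).
rewrite (_ : [set x | _] = setT).
  by rewrite cardsT card_ffun card_bool card_ord.
apply/setP=> x; rewrite !inE.
have -> : maj I (flips (enum I) x) = (- maj I x)%R.
  rewrite /maj -sgrN -sumrN; congr Num.sg; apply: eq_bigr => j jI.
  by rewrite flipsE ?enum_uniq // mem_enum jI pmN.
have := maj_neq0 x oI.
by case: (maj I x) => [[|k]|k].
Qed.

Section Swap.
Variables i i' : 'I_n.
Definition sw j := if j == i then i' else if j == i' then i else j.
Lemma swK : involutive sw.
Proof.
move=> j; rewrite /sw; case: (eqVneq j i) => [->|ji]; first by rewrite eqxx; case: eqP.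
case: (eqVneq j i') => [->|ji']; first by rewrite eqxx.
by rewrite (negbTE ji) (negbTE ji').
Qed.
Lemma sw_inj : injective sw. Proof. exact: inv_inj swK. Qed.
Lemma sw_i : sw i = i'. Proof. by rewrite /sw eqxx. Qed.
Definition permx y : cube n := [ffun j => y (sw j)].
Lemma permxK : involutive permx.
Proof. by move=> y; apply/ffunP=> j; rewrite !ffunE swK. Qed.
Lemma sw_mem I j : i \in I -> i' \in I -> (sw j \in I) = (j \in I).
Proof.
move=> iI i'I; rewrite /sw; case: (eqVneq j i) => [->|_]; first by rewrite iI i'I.
by case: (eqVneq j i') => [->|_]; first by rewrite iI i'I.
Qed.
Lemma maj_permx I y : i \in I -> i' \in I -> maj I (permx y) = maj I y.
Proof.
move=> iI i'I; rewrite /maj; congr Num.sg.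
rewrite [RHS](reindex_inj sw_inj) /=; apply: eq_big => j; first by rewrite sw_mem.
by move=> _; rewrite ffunE.
Qed.
Lemma flip_permx y : flip i (permx y) = permx (flip i' y).
Proof.
apply/ffunP=> j; rewrite !ffunE -sw_i (inj_eq sw_inj); by [].
Qed.
Lemma piv_sym I : i \in I -> i' \in I -> #|piv I i'| = #|piv I i|.
Proof.
move=> iI i'I.
rewrite -(card_preimset (piv I i) (inv_inj permxK)); apply: eq_card => y; rewrite !inE flip_permx !maj_permx //.
Qed.
End Swap.

Lemma piv_lower I i : odd #|I| -> i \in I -> 2 ^ n <= #|I| * #|piv I i|.
Proof.
move=> oI iI; rewrite -sum_nat_const; apply: leq_trans (piv_sum oI) _.
by apply: eq_leq; apply: eq_bigr => j jI; rewrite (piv_sym iI jI).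
Qed.

Definition D I J := [set x | maj I x != maj J x].

Lemma DC I J : D I J = D J I.
Proof. by apply/setP=> x; rewrite !inE eq_sym. Qed.

Lemma piv_D I J i : i \notin J -> #|piv I i| <= 2 * #|D I J|.
Proof.
move=> iJ; apply: (@leq_trans #|D I J :|: flip i @^-1: D I J|).
  apply: subset_leq_card; apply/subsetP=> x; rewrite !inE /= => h.
  apply/orP; case: (eqVneq (maj I x) (maj J x)) => [e|ne]; last by left.
  by right; rewrite (maj_flip_out _ iJ) -e eq_sym.
apply: leq_trans (leq_card_setU _ _).1 _.
by rewrite card_preimset ?mul2n ?addnn //; exact: flip_inj.
Qed.

Lemma D_lower I J : odd #|I| -> odd #|J| -> I != J -> 2 ^ n <= 2 * n * #|D I J|.
Proof.
move=> oI oJ IJ.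
have cI : forall K : {set 'I_n}, #|K| <= n by move=> K; rewrite -[n in _ <= n]card_ord max_card.
have key : forall (K L : {set 'I_n}) i, odd #|K| -> i \in K -> i \notin L -> 2 ^ n <= 2 * n * #|D K L|.
  move=> K L i oK iK iL; apply: leq_trans (piv_lower oK iK) _.
  rewrite mulnAC mulnC; apply: leq_mul; last exact: cI.
  by apply: piv_D.
case: (boolP (I \subset J)) => [sIJ|/subsetPn [i iI iJ]]; last exact: key oI iI iJ.
have : ~~ (J \subset I) by apply: contra IJ => sJI; rewrite eqEsubset sIJ sJI.
by case/subsetPn => i iJ iI; rewrite DC; exact: key oJ iJ iI.
Qed.

End Comb.

Local Notation rexp := Rtrigo_def.exp.
Local Open Scope R_scope.

Lemma exp_pow_R (x : R) (k : nat) : (rexp x ^ k = rexp (INR k * x)).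
Proof.
elim: k => [|k IH]; first by rewrite /= Rmult_0_l exp_0.
change (rexp x ^ k.+1) with (rexp x * rexp x ^ k); rewrite IH -exp_plus S_INR; congr rexp; ring.
Qed.

Lemma INR_expn (m k : nat) : INR (expn m k) = INR m ^ k.
Proof.
elim: k => [|k IH]; first by [].
by rewrite expnS mulnE mult_INR IH.
Qed.

Lemma base_ineq (N d q : nat) : (0 < q)%N -> (N <= q * d)%N -> (d <= N)%N ->
  (2 * (N - d) ^ q <= N ^ q)%N.
Proof.
move=> q0 hN hd.
have hN' : (INR N <= INR q * INR d) by rewrite -mult_INR; apply: le_INR; apply/leP.
have hd' : (INR d <= INR N) by apply: le_INR; apply/leP.
have q0' : (0 < INR q) by apply: lt_0_INR; apply/ltP.
apply/leP; apply: INR_le.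
rewrite mulnE mult_INR !INR_expn minus_INR; last by apply/leP.
set Nr := INR N in hN' hd' *; set dr := INR d in hN' hd' *; set qr := INR q in hN' q0' *.
have h1 : (Nr - dr <= Nr * (1 - / qr)).
  have : (Nr / qr <= dr).
    apply (Rmult_le_reg_l qr); first by [].
    replace (qr * (Nr / qr)) with Nr by (field; lra); lra.
  rewrite /Rdiv => h; nra.
have h0 : (0 <= Nr - dr) by lra.
have hq1 : (/ qr <= 1).
  have : (1 <= qr) by rewrite /qr -(INR_1); apply: le_INR; apply/leP.
  move=> h; rewrite -Rinv_1; apply: Rinv_le_contravar; lra.
have hi : (0 < / qr) by apply: Rinv_0_lt_compat.
have e1 : (1 - / qr <= rexp (- / qr)).
  have ne : - / qr <> 0 by apply: Rlt_not_eq; lra.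
  have := exp_ineq1 (- / qr) ne; lra.
have e2 : ((1 - / qr) ^ q <= rexp (-1)).
  apply: Rle_trans (_ : rexp (- / qr) ^ q <= _).
    apply: pow_incr; lra.
  rewrite exp_pow_R; right; congr rexp; rewrite -/qr; field; apply: Rgt_not_eq; lra.
have e3 : (rexp (-1) < / 2).
  have x1 := exp_ineq1 1 R1_neq_R0; have x2 := exp_pos 1.
  have x3 : rexp (-1) * rexp 1 = 1 by rewrite -exp_plus; replace (-1 + 1) with 0 by ring; exact: exp_0.
  have x4 := exp_pos (-1).
  nra.
have e4 : ((Nr - dr) ^ q <= Nr ^ q * (1 - / qr) ^ q).
  rewrite -Rpow_mult_distr; apply: pow_incr; lra.
have e5 : (0 <= Nr ^ q) by apply: pow_le; rewrite /Nr; apply: pos_INR.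
rewrite /= ; nra.
Qed.

Local Close Scope R_scope.
Lemma pow_ineq (N d q k : nat) : (0 < q)%N -> (N <= q * d)%N -> (d <= N)%N ->
  (2 ^ k * (N - d) ^ (q * k) <= N ^ (q * k))%N.
Proof.
move=> q0 hN hd; have b := @base_ineq N d q q0 hN hd.
elim: k => [|k IH]; first by rewrite muln0.
rewrite mulnS !expnD expnS mulnACA; exact: leq_mul.
Qed.

Lemma card_le_sum (T K : finType) (P : pred K) (A : {set T}) (B : K -> {set T}) :
  (forall x, x \in A -> exists2 j, P j & x \in B j) -> #|A| <= \sum_(j | P j) #|B j|.
Proof.
move=> h; rewrite -sum1_card.
have -> : \sum_(j | P j) #|B j| = \sum_(j | P j) \sum_(x in B j) 1.
  by apply: eq_bigr => j _; rewrite sum1_card.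
rewrite (exchange_big_dep xpredT) //=.
rewrite big_mkcond /=; apply: leq_sum => x _.
case: ifP => // xA; have [j Pj xB] := h x xA.
rewrite (bigD1 j) /=; [exact: leq_addr | by rewrite Pj xB].
Qed.

Lemma card_tuple_all (T : finType) (m : nat) (A : {set T}) :
  #|[set xs : m.-tuple T | all (fun y => y \in A) xs]| <= #|A| ^ m.
Proof.
pose f (xs : m.-tuple T) : {ffun 'I_m -> T} := [ffun t => tnth xs t].
have finj : injective f.
  move=> xs ys /ffunP e; apply: eq_from_tnth => t; by have := e t; rewrite !ffunE.
rewrite -(card_imset _ finj) -[in X in _ <= X](card_ord m) -card_ffun_on.
apply: subset_leq_card; apply/subsetP=> g /imsetP [xs]; rewrite inE => /all_tnthP h ->.
by apply/ffun_onP => t; rewrite ffunE; exact: h.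
Qed.

Definition learnerL : learner := fun n _ S =>
  match [pick J : {set 'I_n} | odd #|J| && all (fun p => maj J p.1 == p.2) S] with
  | Some J => maj J
  | None => fun _ => 0%R
  end.

Lemma bad_card n (I : {set 'I_n}) (d : R) (L m : nat) : odd #|I| -> m = 2 * n * (n + L) ->
  #|~: [set xs : m.-tuple (cube n) |
        [forall x : cube n, @learnerL n d [seq (y, maj I y) | y <- xs] x == maj I x]]| * 2 ^ L
  <= #|cube n| ^ m.
Proof.
move=> oI em.
set bad := ~: _.
pose B (J : {set 'I_n}) := [set xs : m.-tuple (cube n) | all (fun y => y \in ~: D I J) xs].
have hb : #|bad| <= \sum_(J : {set 'I_n} | odd #|J| && (J != I)) #|B J|.
  apply: card_le_sum => xs; rewrite !inE => /forallPn [x0].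
  rewrite /learnerL; case: pickP => [J /andP [oJ hJ]|hn]; last first.
    have hI : all (fun p => maj I p.1 == p.2) [seq (y, maj I y) | y <- xs].
      by rewrite all_map; apply/allP => y _ /=.
    by move: (hn I); rewrite oI hI.
  case: (eqVneq J I) => [-> | JI]; first by rewrite eqxx.
  move=> _; exists J; first by rewrite oJ JI.
  rewrite inE; move: hJ; rewrite all_map => /allP h; apply/allP => y yx.
  by rewrite !inE negbK; have := h y yx; rewrite eq_sym.
have cn : #|cube n| = 2 ^ n by rewrite card_ffun card_bool card_ord.
have n0 : 0 < n.
  case: n I oI {bad B hb cn em} => // I; rewrite (_ : #|I| = 0) //.
  by apply/eqP; rewrite cards_eq0; apply/eqP/setP => -[].
have hterm : forall J : {set 'I_n}, odd #|J| && (J != I) -> 2 ^ (n + L) * #|B J| <= #|cube n| ^ m.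
  move=> J /andP [oJ JI].
  apply: leq_trans (_ : 2 ^ (n + L) * (#|cube n| - #|D I J|) ^ m <= _).
    rewrite leq_mul2l; apply/orP; right.
    have -> : #|cube n| - #|D I J| = #|~: D I J| by rewrite [in RHS]cardsCs setCK.
    exact: card_tuple_all.
  rewrite em; apply: pow_ineq; first by rewrite muln_gt0 n0.
    rewrite cn; apply: D_lower => //; by rewrite eq_sym.
  exact: max_card.
have : 2 ^ (n + L) * #|bad| <= 2 ^ n * #|cube n| ^ m.
  apply: leq_trans (_ : \sum_(J : {set 'I_n} | odd #|J| && (J != I)) #|cube n| ^ m <= _).
    apply: leq_trans (_ : 2 ^ (n + L) * \sum_(J : {set 'I_n} | odd #|J| && (J != I)) #|B J| <= _).
      by rewrite leq_mul2l hb orbT.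
    rewrite big_distrr /=; exact: leq_sum.
  rewrite sum_nat_const; apply: leq_mul => //.
  have <- : #|{set 'I_n}| = 2 ^ n.
    by rewrite -cardsT -powersetT card_powerset cardsT card_ord.
  exact: max_card.
rewrite expnD -mulnA leq_pmul2l ?expn_gt0 // mulnC.
by [].
Qed.

Definition Lof (d : R) : nat := Z.to_nat (up (/ d)).
Definition mfun (n : nat) (d : R) : nat := 2 * n * (n + Lof d).

Local Open Scope R_scope.

Lemma Lof_bounds d : 0 < d -> / d <= INR (Lof d) <= / d + 1.
Proof.
move=> hd; have [h1 h2] := archimed (/ d).
have hi : 0 < / d by apply: Rinv_0_lt_compat.
have z0 : Z.le 0 (up (/ d)) by apply: le_IZR; lra.
rewrite /Lof INR_IZR_INZ Znat.Z2Nat.id //; lra.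
Qed.

Theorem main_thm :
  exists (m : nat -> R -> nat) (L : learner),
    poly_sample_size m /\
    forall (n : nat) (I : {set 'I_n}), odd #|I| ->
    forall delta : R, Rlt R0 delta ->
      Rle (Rminus R1 delta) (success_prob I (m n delta) (L n delta)).
Proof.
exists mfun, learnerL; split.
  exists 2%N, 2%N => n d hd.
  have [l1 l2] := Lof_bounds hd.
  have hi : 0 < / d by apply: Rinv_0_lt_compat.
  have n0 := pos_INR n.
  rewrite /mfun -!multE -plusE !mult_INR plus_INR /=.
  set a := INR n in n0 *; set l := INR (Lof d) in l1 l2 *; set t := / d in hi l1 l2 *.
  have h3 : a + l <= (a + 1) * (1 + t) by nra.
  have h4 : 0 <= a + l by nra.
  have h5 : 1 + t <= (1 + t) * (1 + t) by nra.
  have h6 : a * (a + l) <= (a + 1) * ((a + 1) * (1 + t) * (1 + t)) by nra.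
  nra.
move=> n I oI d hd.
rewrite /success_prob.
have hb := @bad_card n I d (Lof d) (mfun n d) oI erefl.
set m := mfun n d in hb *.
set G := [set xs : m.-tuple (cube n) | _] in hb *.
have hc := cardsC G.
rewrite -card_tuple in hb.
have hL : (Lof d < 2 ^ Lof d)%N by apply: ltn_expl.
have hb2 : (#|~: G| * Lof d <= #|{: m.-tuple (cube n)}|)%N.
  by apply: leq_trans hb; rewrite leq_mul2l (ltnW hL) orbT.
have hT : (0 < #|{: m.-tuple (cube n)}|)%N.
  by rewrite card_tuple expn_gt0 card_ffun card_bool card_ord expn_gt0.
have [l1 l2] := Lof_bounds hd.
have hi : 0 < / d by apply: Rinv_0_lt_compat.
have r1 : INR #|~: G| * INR (Lof d) <= INR #|{: m.-tuple (cube n)}|.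
  by rewrite -mult_INR; apply: le_INR; apply/leP.
have r2 : INR #|G| + INR #|~: G| = INR #|{: m.-tuple (cube n)}|.
  by rewrite -plus_INR; congr INR.
have r3 : 0 < INR #|{: m.-tuple (cube n)}| by apply: lt_0_INR; apply/ltP.
have r4 : 0 <= INR #|~: G| by apply: pos_INR.
set g := INR #|G| in r2 *; set b := INR #|~: G| in r1 r2 r4 *.
set t := INR #|{: m.-tuple (cube n)}| in r1 r2 r3 *; set l := INR (Lof d) in r1 l1 l2 *.
have r5 : b * / d <= t by nra.
have r6 : b <= d * t.
  have : d * (b * / d) = b by field; apply: Rgt_not_eq.
  nra.
apply: (Rmult_le_reg_r t) => //.
rewrite /Rdiv Rmult_assoc Rinv_l; last by apply: Rgt_not_eq.
nra.
Qed.

Local Close Scope R_scope.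

Theorem theorem5p3 :
  exists (m : nat -> R -> nat) (L : learner),
    poly_sample_size m /\
    forall (n : nat) (I : {set 'I_n}), odd #|I| ->
    forall delta : R, Rlt R0 delta ->
      Rle (Rminus R1 delta) (success_prob I (m n delta) (L n delta)).
Proof. exact: main_thm. Qed.
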